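(* Let $K$ be a field and let $I_A\subset K[x_1,\ldots,x_n]$ be a toric ideal of height $2$. Then $\mathrm{Split}(I_A)=\mu(I_A)$ and $\mathrm{Split}_{\mathrm{rad}}(I_A)=\mathrm{bar}(I_A)$.
   Context: $A=\{{\bf a}_1,\ldots,{\bf a}_n\}\subset\mathbb{Z}^m$ with $\ker_{\mathbb{Z}}(A)\cap\mathbb{N}^n=\{{\bf 0}\}$, where $\ker_{\mathbb{Z}}(A)=\{{\bf u}\in\mathbb{Z}^n\mid\sum u_i{\bf a}_i={\bf 0}\}$; $I_A$ is the kernel of $K[x_1,\ldots,x_n]\to K[t_1^{\pm1},\ldots,t_m^{\pm1}]$, $x_i\mapsto{\bf t}^{{\bf a}_i}$, and its height equals $\dim_{\mathbb{Q}}\ker_{\mathbb{Q}}(A)$. $\mu(I_A)$ is the minimal number of generators of $I_A$. $\mathrm{bar}(I_A)$ is the smallest $t$ such that there exist binomials $B_1,\ldots,B_t\in I_A$ with $I_A=\mathrm{rad}(B_1,\ldots,B_t)$. $\mathrm{Split}(I_A)$ is the smallest integer $s$ such that there exist toric ideals $I_{A_1},\ldots,I_{A_s}\subset K[x_1,\ldots,x_n]$ with $I_A=I_{A_1}+\cdots+I_{A_s}$ and $I_{A_i}\ne I_A$ for all $i$; $\mathrm{Split}_{\mathrm{rad}}(I_A)$ is the smallest integer $r$ such that there exist toric ideals $I_{A_1},\ldots,I_{A_r}\subset K[x_1,\ldots,x_n]$ with $I_A=\mathrm{rad}(I_{A_1}+\cdots+I_{A_r})$ and $I_{A_i}\ne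 I_A$ for all $i$. *)

(* Defs.v *)
From HB Require Import structures.
From mathcomp Require Import all_boot all_order all_algebra.
From mathcomp Require Import mpoly.

Set Implicit Arguments.
Unset Strict Implicit.
Unset Printing Implicit Defensive.

Import Order.TTheory GRing.Theory Num.Theory.
Local Open Scope ring_scope.

Definition pset (K : fieldType) (n : nat) := {mpoly K[n]} -> Prop.

Definition same_set (K : fieldType) (n : nat) (I J : pset K n) : Prop :=
  forall f, I f <-> J f.

(* A is the m x n integer matrix whose columns are a_1, ..., a_n.
   Amul A u = sum_i u_i a_i  (u in N^n, given as an exponent vector). *)
Definition Amul (m n : nat) (A : 'M[int]_(m, n)) (u : 'X_{1..n}) : 'cV[int]_m :=
  \col_(j < m) \sum_(i < n) A j i * (u i)%:Z.

Definition pointed (m n : nat) (A : 'M[int]_(m, n)) : Prop :=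
  forall u : 'X_{1..n}, Amul A u = 0 -> u = 0%MM.

(* The monomial map x_i |-> t^{a_i} sends f = sum_u c_u x^u to the Laurent
   polynomial sum_b (sum_{u : A u = b} c_u) t^b; its coefficient at t^b: *)
Definition toric_image (K : fieldType) (m n : nat) (A : 'M[int]_(m, n))
  (f : {mpoly K[n]}) (b : 'cV[int]_m) : K :=
  \sum_(u <- msupp f | Amul A u == b) f@_u.

Definition toric_ideal (K : fieldType) (m n : nat) (A : 'M[int]_(m, n)) : pset K n :=
  fun f => forall b : 'cV[int]_m, toric_image A f b = 0.

Arguments toric_ideal K [m n] A.

Definition is_toric (K : fieldType) (n : nat) (I : pset K n) : Prop :=
  exists (m' : nat) (B : 'M[int]_(m', n)), pointed B /\ same_set I (toric_ideal K B).

Definition ideal_gen (K : fieldType) (n t : nat) (g : 'I_t -> {mpoly K[n]}) : pset K n :=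
  fun f => exists c : 'I_t -> {mpoly K[n]}, f = \sum_(i < t) c i * g i.

Definition ideal_sum (K : fieldType) (n s : nat) (Is : 'I_s -> pset K n) : pset K n :=
  fun f => exists h : 'I_s -> {mpoly K[n]}, (forall i, Is i (h i)) /\ f = \sum_(i < s) h i.

Definition rad (K : fieldType) (n : nat) (J : pset K n) : pset K n :=
  fun f => exists k : nat, J (f ^+ k).

Definition binomial (K : fieldType) (n : nat) (B : {mpoly K[n]}) : Prop :=
  exists (u v : 'X_{1..n}) (c d : K), B = c *: 'X_[u] + d *: 'X_[v].

Definition least (P : nat -> Prop) (t : nat) : Prop :=
  P t /\ forall s, P s -> (t <= s)%N.

(* Properties whose least witnesses define mu, bar, Split, Split_rad. *)
Definition mu_prop (K : fieldType) (n : nat) (I : pset K n) (t : nat) : Prop :=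
  exists g : 'I_t -> {mpoly K[n]}, same_set I (ideal_gen g).

Definition bar_prop (K : fieldType) (n : nat) (I : pset K n) (t : nat) : Prop :=
  exists g : 'I_t -> {mpoly K[n]},
    (forall i, binomial (g i)) /\ (forall i, I (g i)) /\ same_set I (rad (ideal_gen g)).

Definition split_prop (K : fieldType) (n : nat) (I : pset K n) (s : nat) : Prop :=
  exists Is : 'I_s -> pset K n,
    (forall i, is_toric (Is i)) /\ (forall i, ~ same_set (Is i) I) /\
    same_set I (ideal_sum Is).

Definition split_rad_prop (K : fieldType) (n : nat) (I : pset K n) (r : nat) : Prop :=
  exists Is : 'I_r -> pset K n,
    (forall i, is_toric (Is i)) /\ (forall i, ~ same_set (Is i) I) /\
    same_set I (rad (ideal_sum Is)).

(* dim_Q ker_Q(A) = n - rank_Q(A). *)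
Definition kerQ_dim (m n : nat) (A : 'M[int]_(m, n)) : nat :=
  (n - \rank (map_mx (fun z : int => z%:~R : rat) A))%N.

(* Main.v *)
Require Import Defs.
From HB Require Import structures.
From mathcomp Require Import all_boot all_order all_algebra.
From mathcomp Require Import mpoly.
Set Implicit Arguments.
Unset Strict Implicit.
Unset Printing Implicit Defensive.
Import Order.TTheory GRing.Theory Num.Theory.
Local Open Scope ring_scope.
From mathcomp Require Import zify.
From mathcomp.algebra_tactics Require Import ring.
From Stdlib Require Import Classical.
Section Pi.
Variables (K : fieldType) (n m : nat) (A : 'M[int]_(m, n)).
Implicit Types (f g q : {mpoly K[n]}) (u v w : 'X_{1..n}).

Definition pi (b : 'cV[int]_m) f : {mpoly K[n]} :=
  \sum_(u <- msupp f | Amul A u == b) f@_u *: 'X_[u].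

Lemma pi_coef b f w : (pi b f)@_w = if Amul A w == b then f@_w else 0.
Proof.
rewrite /pi raddf_sum /= big_mkcond /=.
transitivity (\sum_(u <- msupp f) (if Amul A u == b then f@_u * (u == w)%:R else 0)).
  by apply: eq_bigr => u _; case: ifP => _; rewrite ?mcoeffZ ?mcoeffX ?mcoeff0.
case: (boolP (w \in msupp f)) => Hw.
  rewrite (bigD1_seq w) ?msupp_uniq //= eqxx mulr1.
  rewrite big1 ?addr0 //.
  by move=> u /negbTE ->; rewrite mulr0; case: ifP.
rewrite big1_seq.
  by move: Hw; rewrite mcoeff_msupp negbK => /eqP ->; case: ifP.
move=> u /andP[_ Hu]; have /negbTE -> : u != w by apply: contraNneq Hw => <-.
by rewrite mulr0; case: ifP.
Qed.

Lemma piD b f g : pi b (f + g) = pi b f + pi b g.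
Proof. apply/mpolyP=> w; rewrite mcoeffD !pi_coef mcoeffD; by case: ifP; rewrite ?addr0. Qed.
Lemma piN b f : pi b (- f) = - pi b f.
Proof. apply/mpolyP=> w; rewrite mcoeffN !pi_coef mcoeffN; by case: ifP; rewrite ?oppr0. Qed.
Lemma piB b f g : pi b (f - g) = pi b f - pi b g.
Proof. by rewrite piD piN. Qed.
Lemma piZ b c f : pi b (c *: f) = c *: pi b f.
Proof. apply/mpolyP=> w; rewrite mcoeffZ !pi_coef mcoeffZ; by case: ifP; rewrite ?mulr0. Qed.
Lemma pi0 b : pi b 0 = 0.
Proof. apply/mpolyP=> w; by rewrite pi_coef mcoeff0; case: ifP. Qed.
Lemma pi_sum b (I : Type) (r : seq I) (P : pred I) (F : I -> {mpoly K[n]}) :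
  pi b (\sum_(i <- r | P i) F i) = \sum_(i <- r | P i) pi b (F i).
Proof. apply: (big_morph (pi b)); [exact: piD | exact: pi0]. Qed.

Lemma Amul0 : Amul A 0%MM = 0.
Proof. by apply/matrixP=> i j; rewrite !mxE big1 // => k _; rewrite mnm0E mulr0. Qed.

Lemma AmulD u v : Amul A (u + v)%MM = Amul A u + Amul A v.
Proof.
apply/matrixP=> i j; rewrite !mxE -big_split /=; apply: eq_bigr => k _.
by rewrite mnmDE PoszD mulrDr.
Qed.

Lemma mcoeffMX_gen q u w :
  (q * 'X_[u])@_w = if (u <= w)%MM then q@_(w - u)%MM else 0.
Proof.
case: ifP => H.
  by rewrite -{1}(submK H) addmC mcoeffMX.
apply/eqP; rewrite mcoeff_eq0 (perm_mem (msuppMX q u)).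
apply/mapP => -[u' _ E]; move: H; rewrite E lem_addr //.
Qed.

Lemma piMX b q u : pi b (q * 'X_[u]) = pi (b - Amul A u) q * 'X_[u].
Proof.
apply/mpolyP=> w; rewrite pi_coef !mcoeffMX_gen pi_coef.
case: (boolP (u <= w)%MM) => H; last by case: ifP.
have {1}-> : w = ((w - u) + u)%MM by rewrite submK.
rewrite AmulD; congr (if _ then _ else _).
by apply/eqP/eqP => [<-|->]; rewrite ?addrK ?subrK.
Qed.

Definition tau (p : 'X_{1..n} * 'X_{1..n}) : {mpoly K[n]} := 'X_[p.1] - 'X_[p.2].

Lemma piM_tau b q p : Amul A p.1 = Amul A p.2 ->
  pi b (q * tau p) = pi (b - Amul A p.1) q * tau p.
Proof. by move=> E; rewrite /tau mulrBr piB !piMX E mulrBr. Qed.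

Lemma pi_const f : pointed A -> pi 0 f = (f@_0%MM)%:MP.
Proof.
move=> Hp; apply/mpolyP=> w; rewrite pi_coef mcoeffC.
case: eqP => [/Hp ->|H]; first by rewrite eqxx mulr1.
case: eqP => [E|]; last by rewrite mulr0.
by case: H; rewrite E Amul0.
Qed.

Definition ev1 f : K := meval (fun _ => 1) f.

Lemma toric_image_pi b f : toric_image A f b = ev1 (pi b f).
Proof.
rewrite /ev1 /pi /toric_image raddf_sum /=; apply: eq_bigr => u _.
by rewrite mevalZ mevalX big1 ?mulr1 // => i _; rewrite expr1n.
Qed.

Lemma ev1X u : ev1 'X_[u] = 1.
Proof. by rewrite /ev1 mevalX big1 // => i _; rewrite expr1n. Qed.

End Pi.
Section Ideal.
Variables (K : fieldType) (n m : nat) (A : 'M[int]_(m, n)).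
Implicit Types (f g q : {mpoly K[n]}) (u v w : 'X_{1..n}).
Local Notation I := (toric_ideal K A).
Local Notation pi := (pi A).
Local Notation tau := (@tau K n).

Lemma inIP f : I f <-> forall b, ev1 (pi b f) = 0.
Proof. by split=> H b; move: (H b); rewrite toric_image_pi. Qed.

Lemma ev1D f g : ev1 (f + g) = ev1 f + ev1 g. Proof. exact: mevalD. Qed.
Lemma ev1N f : ev1 (- f) = - ev1 f. Proof. exact: mevalN. Qed.
Lemma ev1Z c f : ev1 (c *: f) = c * ev1 f. Proof. exact: mevalZ. Qed.
Lemma ev1M f g : ev1 (f * g) = ev1 f * ev1 g. Proof. exact: mevalM. Qed.
Lemma ev10 : ev1 (0 : {mpoly K[n]}) = 0. Proof. exact: meval0. Qed.

Lemma I0 : I 0.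
Proof. by apply/inIP => b; rewrite pi0 ev10. Qed.
Lemma ID f g : I f -> I g -> I (f + g).
Proof. by move=> /inIP Hf /inIP Hg; apply/inIP => b; rewrite piD ev1D Hf Hg addr0. Qed.
Lemma IN f : I f -> I (- f).
Proof. by move=> /inIP Hf; apply/inIP => b; rewrite piN ev1N Hf oppr0. Qed.
Lemma IB f g : I f -> I g -> I (f - g).
Proof. by move=> Hf Hg; apply: ID => //; apply: IN. Qed.
Lemma IZ c f : I f -> I (c *: f).
Proof. by move=> /inIP Hf; apply/inIP => b; rewrite piZ ev1Z Hf mulr0. Qed.

Lemma IM q f : I f -> I (q * f).
Proof.
move=> /inIP Hf; apply/inIP => b.
rewrite [q]mpolyE mulr_suml pi_sum /ev1 raddf_sum /=.
rewrite big1 // => u _; rewrite -scalerAl piZ mulrC piMX.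
by rewrite -/(ev1 _) ev1Z ev1M Hf mul0r mulr0.
Qed.

Lemma Isum (J : Type) (r : seq J) (P : pred J) (F : J -> {mpoly K[n]}) :
  (forall j, P j -> I (F j)) -> I (\sum_(j <- r | P j) F j).
Proof. by move=> H; apply: big_ind => //; [exact: I0 | exact: ID]. Qed.

Lemma piX b u : pi b ('X_[u] : {mpoly K[n]}) = if Amul A u == b then 'X_[u] else 0.
Proof.
apply/mpolyP=> w; rewrite pi_coef.
case: (eqVneq u w) => [<-|N].
  by case: ifP => _; rewrite ?mcoeff0.
by case: ifP => _; case: ifP => _; rewrite ?mcoeff0 ?mcoeffX ?(negbTE N).
Qed.

Lemma Itau p : I (tau p) <-> Amul A p.1 = Amul A p.2.
Proof.
split=> [/inIP H|E].
  move: (H (Amul A p.1)); rewrite /tau piB !piX eqxx.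
  case: eqP => // _; rewrite subr0 ev1X => /eqP; rewrite oner_eq0 //.
apply/inIP => b; rewrite /tau piB !piX E.
by case: (Amul A p.2 == b); rewrite ?subrr ?ev10 // ev1D ev1N !ev1X subrr.
Qed.

Lemma bin_in_I g : Defs.binomial g -> I g ->
  exists c p, Amul A p.1 = Amul A p.2 /\ g = c *: tau p.
Proof.
move=> [u [v [c [d ->]]]] /inIP H.
case: (eqVneq u v) => [Euv0|Nuv]; first subst v.
  move: (H (Amul A u)); rewrite piD !piZ !piX eqxx ev1D !ev1Z !ev1X !mulr1 => E.
  exists 0, (u, u); split => //.
  by rewrite scale0r -scalerDl E scale0r.
case: (eqVneq (Amul A u) (Amul A v)) => [Euv|Nuv'].
  move: (H (Amul A u)); rewrite piD !piZ !piX Euv eqxx ev1D !ev1Z !ev1X !mulr1 => E.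
  exists c, (u, v); split => //; rewrite /tau scalerBr.
  have -> : d = - c by apply/eqP; rewrite -addr_eq0 addrC E.
  by rewrite scaleNr.
move: (H (Amul A u)); rewrite piD !piZ !piX eqxx eq_sym (negbTE Nuv').
rewrite ev1D !ev1Z !ev1X ev10 !mulr0 mulr1 addr0 => Ec.
move: (H (Amul A v)); rewrite piD !piZ !piX eqxx (negbTE Nuv').
rewrite ev1D !ev1Z !ev1X ev10 !mulr0 mulr1 add0r => Ed.
by exists 0, (u, u); split => //; rewrite Ec Ed !scale0r addr0.
Qed.

End Ideal.
Section Igl.
Variables (K : fieldType) (n : nat).
Implicit Types (f g q : {mpoly K[n]}) (u v w : 'X_{1..n}).
Local Notation tau := (@tau K n).
Definition pair0 : 'X_{1..n} * 'X_{1..n} := (0%MM, 0%MM).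

Fixpoint igl (s : seq ('X_{1..n} * 'X_{1..n})) (f : {mpoly K[n]}) : Prop :=
  match s with
  | [::] => f = 0
  | p :: s' => exists c h, igl s' h /\ f = c * tau p + h
  end.

Definition closed (J : pset K n) :=
  [/\ J 0, (forall f g, J f -> J g -> J (f + g)) & (forall q f, J f -> J (q * f))].

Lemma closedN J f : closed J -> J f -> J (- f).
Proof. by case=> _ _ HM Hf; rewrite -mulN1r; apply: HM. Qed.
Lemma closedB J f g : closed J -> J f -> J g -> J (f - g).
Proof. by move=> HJ Hf Hg; case: (HJ) => _ HD _; apply: HD => //; apply: closedN. Qed.
Lemma closed_sum J (I : Type) (r : seq I) (P : pred I) (F : I -> {mpoly K[n]}) :
  closed J -> (forall i, P i -> J (F i)) -> J (\sum_(i <- r | P i) F i).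
Proof. by case=> H0 HD _ H; apply: big_ind. Qed.

Lemma igl_closed s : closed (igl s).
Proof.
elim: s => [|p s [H0 HD HM]] /=; first by split => // [f g -> ->|q f ->]; rewrite ?addr0 ?mulr0.
split.
- by exists 0, 0; rewrite mul0r addr0.
- move=> f g [c [h [Hh ->]]] [c' [h' [Hh' ->]]].
  exists (c + c'), (h + h'); split; first exact: HD.
  by rewrite mulrDl addrACA.
- move=> q f [c [h [Hh ->]]]; exists (q * c), (q * h); split; first exact: HM.
  by rewrite mulrDr mulrA.
Qed.

Lemma igl_tau s p : p \in s -> igl s (tau p).
Proof.
elim: s => [|p' s IH] //= /[!inE] /orP[/eqP ->|Hp].
  by exists 1, 0; split; [case: (igl_closed s)|rewrite mul1r addr0].
by exists 0, (tau p); split; [exact: IH|rewrite mul0r add0r].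
Qed.

Lemma igl_min J s : closed J -> (forall p, p \in s -> J (tau p)) ->
  forall f, igl s f -> J f.
Proof.
move=> [H0 HD HM]; elim: s => [|p s IH] Hs f /=; first by move->.
move=> [c [h [Hh ->]]]; apply: HD; first by apply: HM; apply: Hs; rewrite inE eqxx.
by apply: IH => // p' Hp'; apply: Hs; rewrite inE Hp' orbT.
Qed.

Lemma igl_sub s s' : {subset s <= s'} -> forall f, igl s f -> igl s' f.
Proof. by move=> H; apply: igl_min; [exact: igl_closed|move=> p /H; exact: igl_tau]. Qed.

Lemma igl_gen s f :
  igl s f <-> ideal_gen (fun i : 'I_(size s) => tau (nth pair0 s i)) f.
Proof.
elim: s f => [|p s IH] f /=.
  by split=> [->|[c ->]]; [exists (fun _ => 0); rewrite big_ord0|rewrite big_ord0].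
split.
  move=> [c [h [/IH [cs Hcs] ->]]].
  exists (fun i : 'I_(size s).+1 => if unlift ord0 i is Some j then cs j else c).
  rewrite big_ord_recl /= Hcs; congr (_ + _); first by rewrite unlift_none.
  by apply: eq_bigr => i _; rewrite liftK.
move=> [cs ->]; rewrite big_ord_recl; exists (cs ord0), (\sum_(i < size s) cs (lift ord0 i) * tau (nth pair0 s i)).
by split=> //; apply/IH; exists (fun i => cs (lift ord0 i)).
Qed.

Lemma igl_gen_N N s f : size s = N ->
  igl s f <-> ideal_gen (fun i : 'I_N => tau (nth pair0 s i)) f.
Proof. by move=> E; subst N; exact: igl_gen. Qed.

End Igl.
Section Decomp.
Variables (K : fieldType) (n m : nat) (A : 'M[int]_(m, n)).
Implicit Types (f g q : {mpoly K[n]}) (u v w : 'X_{1..n}).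
Local Notation I := (toric_ideal K A).
Local Notation tau := (@tau K n).

Definition hmg (s : seq ('X_{1..n} * 'X_{1..n})) :=
  forall p, p \in s -> Amul A p.1 = Amul A p.2.

Lemma fiber_partner f u : I f -> u \in msupp f ->
  exists v, [/\ v \in msupp f, v != u & Amul A v = Amul A u].
Proof.
move=> Hf Hu.
case: (boolP (has (fun v => (v != u) && (Amul A v == Amul A u)) (msupp f))).
  by move/hasP => [v Hv /andP[H1 /eqP H2]]; exists v.
move/hasPn => Hn; exfalso; move: (Hf (Amul A u)); rewrite /toric_image.
rewrite big_mkcond (bigD1_seq u) ?msupp_uniq //= eqxx big1 ?addr0.
  by move/eqP; rewrite mcoeff_eq0 Hu.
move=> w H1; case: ifP => // H2; case: (boolP (w \in msupp f)) => Hw.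
  by move: (Hn w Hw); rewrite H1 H2.
by apply/eqP; rewrite mcoeff_eq0.
Qed.

Lemma decomp f : I f -> exists s, hmg s /\ igl s f.
Proof.
move: {2}(size (msupp f)) (leqnn (size (msupp f))) => k.
elim: k f => [|k IH] f Hk Hf.
  move: Hk; rewrite leqn0 size_eq0 msupp_eq0 => /eqP ->.
  by exists [::].
case: (eqVneq f 0) => [->|Nf]; first by exists [::].
have [u Hu] : exists u, u \in msupp f.
  by case E: (msupp f) => [|u s]; [move: Nf; rewrite -msupp_eq0 E|exists u; rewrite inE eqxx].
have [v [Hv Nvu Ev]] := fiber_partner Hf Hu.
pose f' := f - f@_u *: tau (u, v).
have Hf' : I f'.
  apply: IB => //; apply: IZ; apply/Itau => /=; by rewrite Ev.
have Sf' : {subset msupp f' <= rem u (msupp f)}.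
  move=> w; rewrite (mem_rem_uniq _ (msupp_uniq f)) /= mcoeff_msupp /f' /tau.
  rewrite mcoeffB mcoeffZ mcoeffB !mcoeffX.
  case: (eqVneq u w) => [<-|Nuw]; first by rewrite (negbTE Nvu) subr0 mulr1 subrr eqxx.
  have Nwu : w != u by rewrite eq_sym.
  rewrite !inE Nwu /=.
  case: (eqVneq v w) => [<-|_]; first by move=> _.
  by rewrite subr0 mulr0 subr0 mcoeff_msupp.
have Hk' : (size (msupp f') <= k)%N.
  have := uniq_leq_size (msupp_uniq f') Sf'.
  rewrite size_rem // => H; apply: leq_trans H _.
  by rewrite -subn1 leq_subLR add1n.
have [s [Hs Hfs]] := IH f' Hk' Hf'.
exists ((u, v) :: s); split.
  by move=> p; rewrite inE => /orP[/eqP -> /=|/Hs]; rewrite ?Ev.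
exists (f@_u)%:MP, f'; split=> //.
by rewrite /f' mul_mpolyC addrC subrK.
Qed.

End Decomp.
Section Reduce.
Variables (K : fieldType) (n m : nat) (A : 'M[int]_(m, n)).
Hypothesis HA : pointed A.
Implicit Types (f g q : {mpoly K[n]}) (u v w : 'X_{1..n}).
Local Notation I := (toric_ideal K A).
Local Notation tau := (@tau K n).
Local Notation pi := (pi A).
Local Notation hmg := (hmg A).
Local Notation pair0 := (@pair0 n).

Lemma closed_I : closed I.
Proof. by split; [exact: I0 | exact: ID | exact: IM]. Qed.

Lemma ideal_gen_closed t (g : 'I_t -> {mpoly K[n]}) : closed (ideal_gen g).
Proof.
split.
- by exists (fun _ => 0); rewrite big1 // => i _; rewrite mul0r.
- move=> f h [c ->] [c' ->]; exists (fun i => c i + c' i).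
  by rewrite -big_split; apply: eq_bigr => i _; rewrite mulrDl.
- move=> q f [c ->]; exists (fun i => q * c i).
  by rewrite mulr_sumr; apply: eq_bigr => i _; rewrite mulrA.
Qed.

Lemma ideal_gen_in t (g : 'I_t -> {mpoly K[n]}) i : ideal_gen g (g i).
Proof.
exists (fun j => (i == j)%:R); rewrite (bigD1 i) //= eqxx mul1r big1 ?addr0 //.
by move=> j /negbTE; rewrite eq_sym => ->; rewrite mul0r.
Qed.

Lemma nth_in_rem (s : seq ('X_{1..n} * 'X_{1..n})) (k0 k : nat) :
  (k < size s)%N -> k != k0 -> nth pair0 s k \in take k0 s ++ drop k0.+1 s.
Proof.
move=> Hk Nk; rewrite mem_cat; case: (ltnP k k0) => H.
  apply/orP; left; rewrite -(nth_take _ H); apply: mem_nth.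
  by rewrite size_take; case: ifP => // _; rewrite (leq_trans H).
have H' : (k0.+1 <= k)%N by rewrite ltn_neqAle eq_sym Nk H.
apply/orP; right; rewrite -(subnKC H') -nth_drop; apply: mem_nth.
by rewrite size_drop ltn_sub2r // (leq_ltn_trans H').
Qed.

Lemma rem_sub (s : seq ('X_{1..n} * 'X_{1..n})) k0 :
  {subset take k0 s ++ drop k0.+1 s <= s}.
Proof. by move=> p; rewrite mem_cat => /orP[/mem_take|/mem_drop]. Qed.

Lemma rem_all (s : seq ('X_{1..n} * 'X_{1..n})) k0 p : (k0 < size s)%N ->
  p \in s -> p \in take k0 s ++ drop k0.+1 s \/ p = nth pair0 s k0.
Proof.
move=> Hk; rewrite -{1}(cat_take_drop k0 s) (drop_nth pair0 Hk) mem_cat inE.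
by case/orP => [H|/orP[/eqP->|H]]; [left; rewrite mem_cat H|right|left; rewrite mem_cat H orbT].
Qed.

Lemma size_rem_at (s : seq ('X_{1..n} * 'X_{1..n})) k0 : (k0 < size s)%N ->
  size (take k0 s ++ drop k0.+1 s) = (size s).-1.
Proof.
move=> Hk; rewrite size_cat size_take Hk size_drop.
lia.
Qed.

Variable t : nat.
Variable g : 'I_t -> {mpoly K[n]}.
Hypothesis Hg : same_set I (ideal_gen g).

Lemma reduce_step s : hmg s -> same_set I (igl s) -> (t < size s)%N ->
  exists s', [/\ hmg s', same_set I (igl s') & size s' = (size s).-1].
Proof.
move=> Hs HIs Hts.
set N := size s.
pose T (k : 'I_N) := tau (nth pair0 s k).
have HTI k : I (T k) by apply/HIs; apply: igl_tau; apply: mem_nth.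
have Hex : forall k : 'I_N, exists rk : 'I_t -> {mpoly K[n]},
    T k = \sum_(i < t) rk i * g i.
  by move=> k; have [c Hc] := proj1 (Hg _) (HTI k); exists c.
have [r Hr] := fin_all_exists Hex.
have Hex' : forall i : 'I_t, exists ri : 'I_N -> {mpoly K[n]},
    g i = \sum_(k < N) ri k * T k.
  move=> i; have /HIs /igl_gen [c Hc] := proj2 (Hg _) (ideal_gen_in g i).
  by exists c.
have [r' Hr'] := fin_all_exists Hex'.
pose M : 'M[K]_(N, t) := \matrix_(k, i) (r k i)@_0%MM.
have nfree : ~~ row_free M.
  rewrite /row_free; apply/negP => /eqP E; move: (rank_leq_col M).
  by rewrite E leqNgt Hts.
move: nfree; rewrite -kermx_eq0 => /rowV0Pn [c /sub_kermxP cM c0].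
have [k0 ck0] : exists k0, c 0 k0 != 0.
  move/rV0Pn: c0 => [k0 Hk0]; by exists k0.
pose p (i : 'I_t) := \sum_(k < N) (c 0 k)%:MP * r k i.
pose e (k : 'I_N) := (c 0 k)%:MP - \sum_(i < t) p i * r' i k.
have E1 : \sum_(k < N) (c 0 k)%:MP * T k = \sum_(i < t) p i * g i.
  rewrite /p; under [RHS]eq_bigr do rewrite mulr_suml.
  rewrite exchange_big /=; apply: eq_bigr => k _.
  by rewrite Hr mulr_sumr; apply: eq_bigr => i _; rewrite mulrA.
have E2 : \sum_(i < t) p i * g i = \sum_(k < N) (\sum_(i < t) p i * r' i k) * T k.
  under [RHS]eq_bigr do rewrite mulr_suml.
  rewrite exchange_big /=; apply: eq_bigr => i _.
  by rewrite Hr' mulr_sumr; apply: eq_bigr => k _; rewrite mulrA.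
have He : \sum_(k < N) e k * T k = 0.
  rewrite /e; under eq_bigr do rewrite mulrBl.
  by rewrite sumrB E1 E2 subrr.
have Hp0 i : (p i)@_0%MM = 0.
  rewrite /p raddf_sum /=.
  transitivity (\sum_j c 0 j * M j i); last by move/matrixP: cM => /(_ 0 i); rewrite !mxE.
  by apply: eq_bigr => k _; rewrite mcoeffCM mxE.
have He0 : (e k0)@_0%MM = c 0 k0.
  rewrite /e mcoeffB mcoeffC eqxx mulr1 raddf_sum /= big1 ?subr0 // => i _.
  by rewrite mcoeff0_is_multiplicative Hp0 mul0r.
pose pk0 := nth pair0 s k0.
have HTk (k : 'I_N) : Amul A (nth pair0 s k).1 = Amul A (nth pair0 s k).2.
  by apply: Hs; apply: (mem_nth pair0 (ltn_ord k)).
pose beta := Amul A pk0.1.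
have Hpi : pi beta (\sum_(k < N) e k * T k) = 0 by rewrite He pi0.
rewrite pi_sum (bigD1 k0) //= /T (piM_tau _ _ (HTk k0)) /beta /pk0 subrr pi_const // He0 in Hpi.
set s' := take k0 s ++ drop k0.+1 s.
have Hk0 : (k0 < size s)%N by [].
have HTk0 : igl s' (T k0).
  move/eqP: Hpi; rewrite addr_eq0 => /eqP Hpi.
  have -> : T k0 = ((c 0 k0)^-1)%:MP * ((c 0 k0)%:MP * T k0).
    by rewrite mulrA -mpolyCM mulVf // mpolyC1 mul1r.
  case: (igl_closed K s') => _ _ HM; rewrite /T Hpi; apply: (HM).
  apply: closedN; first exact: igl_closed.
  apply: closed_sum; first exact: igl_closed.
  move=> k Nk; rewrite (piM_tau _ _ (HTk k)); apply: HM.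
  by apply: igl_tau; apply: nth_in_rem.
exists s'; split.
- by move=> q /rem_sub; apply: Hs.
- move=> f; rewrite HIs; split; last by apply: igl_sub; exact: rem_sub.
  apply: igl_min; first exact: igl_closed.
  move=> q /(rem_all Hk0) [H|->]; first exact: igl_tau.
  exact: HTk0.
- exact: size_rem_at.
Qed.

Lemma reduce_all N s : size s = N -> hmg s -> same_set I (igl s) -> (t <= N)%N ->
  exists s', [/\ size s' = t, hmg s' & same_set I (igl s')].
Proof.
elim: N s => [|N IH] s Hsz Hs HIs Ht.
  by move: Ht; rewrite leqn0 => /eqP E; exists s; rewrite Hsz E.
case: (eqVneq t N.+1) => [E|Nt]; first by exists s; rewrite Hsz E.
have Hlt : (t < size s)%N by rewrite Hsz ltn_neqAle Nt Ht.
have [s' [Hs' HIs' Hsz']] := reduce_step Hs HIs Hlt.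
apply: (IH s') => //; first by rewrite Hsz' Hsz.
by rewrite -ltnS ltn_neqAle Nt Ht.
Qed.

End Reduce.
Section MuBin.
Variables (K : fieldType) (n m : nat) (A : 'M[int]_(m, n)).
Hypothesis HA : pointed A.
Local Notation I := (toric_ideal K A).
Local Notation tau := (@tau K n).
Local Notation hmg := (hmg A).
Local Notation pair0 := (@pair0 n).

Lemma mu_bin t : mu_prop I t ->
  exists s, [/\ size s = t, hmg s & same_set I (igl s)].
Proof.
move=> [g Hg].
have HgI i : I (g i) by apply/Hg; exact: ideal_gen_in.
have Hex : forall i : 'I_t, exists si, hmg si /\ igl si (g i).
  by move=> i; apply: decomp.
have [S HS] := fin_all_exists Hex.
pose s0 := nseq t pair0 ++ flatten [seq S i | i <- enum 'I_t].
have Hsub i : {subset S i <= s0}.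
  move=> p Hp; rewrite mem_cat; apply/orP; right.
  by apply/flattenP; exists (S i) => //; apply/mapP; exists i; rewrite ?mem_enum.
have Hs0 : hmg s0.
  move=> p; rewrite mem_cat => /orP[/nseqP [-> _] //|/flattenP [si /mapP [i _ ->] Hp]].
  exact: (proj1 (HS i)).
have HI0 : same_set I (igl s0).
  move=> f; split.
    move/Hg => [c ->]; apply: closed_sum; first exact: igl_closed.
    move=> i _; case: (igl_closed K s0) => _ _ HM; apply: HM.
    exact: igl_sub (Hsub i) _ (proj2 (HS i)).
  apply: igl_min; first exact: closed_I.
  by move=> p /Hs0 E; apply/Itau.
apply: (reduce_all HA Hg (erefl (size s0))) => //.
by rewrite size_cat size_nseq leq_addr.
Qed.

End MuBin.
Section Vec.
Variables (n : nat).
Implicit Types (u v : 'X_{1..n}) (w d : 'rV[int]_n).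

Definition rv u : 'rV[int]_n := \row_i (u i)%:Z.
Definition qv w : 'rV[rat]_n := map_mx (fun z : int => z%:~R : rat) w.
Definition mpos w : 'X_{1..n} := [multinom (if (0 <= w 0%R i)%R then `|w 0%R i|%N else 0%N) | i < n].
Definition mneg w : 'X_{1..n} := [multinom (if (w 0%R i < 0)%R then `|w 0%R i|%N else 0%N) | i < n].

Lemma rv_pos_neg w : rv (mpos w) - rv (mneg w) = w.
Proof.
apply/rowP => i; rewrite !mxE !mnmE.
case: (lerP 0 (w 0 i)) => H.
  by rewrite subr0 abszE ger0_norm.
by rewrite sub0r abszE ltr0_norm // opprK.
Qed.

Lemma rv_inj u v : rv u = rv v -> u = v.
Proof. by move/rowP => H; apply/mnmP => i; move: (H i); rewrite !mxE => -[]. Qed.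

Lemma qv_eq0 w : (qv w == 0) = (w == 0).
Proof.
apply/eqP/eqP => [/rowP H|->]; last by apply/rowP => i; rewrite !mxE.
by apply/rowP => i; move: (H i); rewrite !mxE => /eqP; rewrite intr_eq0 => /eqP.
Qed.

Lemma qvB w d : qv (w - d) = qv w - qv d.
Proof. by apply/rowP => i; rewrite !mxE rmorphB. Qed.

Lemma qvZ (k : int) w : qv (k *: w) = k%:~R *: qv w.
Proof. by apply/rowP => i; rewrite !mxE rmorphM. Qed.

Lemma int_scale (r : 'rV[rat]_n) :
  exists N : int, N != 0 /\ exists z, qv z = N%:~R *: r.
Proof.
exists (\prod_i denq (r 0 i)); split.
  by apply/prodf_neq0 => i _; rewrite denq_neq0.
exists (\row_i (numq (r 0 i) * \prod_(j | j != i) denq (r 0 j))).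
apply/rowP => i; rewrite !mxE rmorphM /= rmorph_prod /= [in RHS](bigD1 i) //= rmorphM /= rmorph_prod /=.
by rewrite numqE; ring.
Qed.

End Vec.

Section Lat.
Variables (n m : nat) (A : 'M[int]_(m, n)).
Implicit Types (u v : 'X_{1..n}) (w d : 'rV[int]_n).
Definition AQ : 'M[rat]_(m, n) := map_mx (fun z : int => z%:~R : rat) A.

Lemma Amul_rv u : Amul A u = (rv u *m A^T)^T.
Proof. by apply/matrixP => j k; rewrite !mxE; apply: eq_bigr => i _; rewrite !mxE mulrC. Qed.

Lemma Amul_eq u v : (Amul A u = Amul A v) <-> ((rv u - rv v) *m A^T = 0).
Proof.
rewrite !Amul_rv; split => [/trmx_inj E|E].
  by rewrite mulmxBl E subrr.
by congr trmx; apply/eqP; rewrite -subr_eq0 -mulmxBl E.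
Qed.

Lemma ker_Q w : (w *m A^T = 0) <-> (qv w <= kermx AQ^T)%MS.
Proof.
rewrite sub_kermx /qv /AQ map_trmx -map_mxM; split => [->|/eqP H].
  by apply/eqP/matrixP => i j; rewrite !mxE.
apply/matrixP => i j; move/matrixP: H => /(_ i j).
rewrite !mxE => /eqP; rewrite intr_eq0 => /eqP ->.
by [].
Qed.

Lemma Amul_pos_neg w : w *m A^T = 0 -> Amul A (mpos w) = Amul A (mneg w).
Proof. by move=> H; apply/Amul_eq; rewrite rv_pos_neg. Qed.

Lemma rank_kerQ : kerQ_dim A = 2%N -> \rank (kermx AQ^T) = 2%N.
Proof. by rewrite mxrank_ker mxrank_tr. Qed.

Hypothesis Hdim : kerQ_dim A = 2%N.

Lemma ex_ker_nz : exists w, w != 0 /\ w *m A^T = 0.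
Proof.
have : kermx AQ^T != 0 by rewrite -mxrank_eq0 (rank_kerQ Hdim).
case/rowV0Pn => r Hr Nr.
have [N [NN [z Hz]]] := int_scale r.
exists z; split.
  by rewrite -qv_eq0 Hz scaler_eq0 negb_or intr_eq0 NN.
by apply/ker_Q; rewrite Hz scalemx_sub.
Qed.

Lemma ex_ker_indep d : d != 0 ->
  exists w i j, w *m A^T = 0 /\ d 0 j * w 0 i - d 0 i * w 0 j != 0.
Proof.
move=> Nd.
have : ~~ (kermx AQ^T <= qv d)%MS.
  apply/negP => /mxrankS; rewrite (rank_kerQ Hdim) rank_rV.
  by case: (qv d != 0).
case/row_subPn => k Hk.
have [N [NN [z Hz]]] := int_scale (row k (kermx AQ^T)).
exists z.
have Hz0 : z *m A^T = 0 by apply/ker_Q; rewrite Hz scalemx_sub // row_sub.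
suff : exists i j, d 0 j * z 0 i - d 0 i * z 0 j != 0.
  by move=> [i [j H]]; exists i, j.
case: (boolP [exists i, exists j, d 0 j * z 0 i - d 0 i * z 0 j != 0]).
  by move=> /existsP [i /existsP [j H]]; exists i, j.
move=> Hn; exfalso; apply: (negP Hk).
have [l Hl] : exists l, d 0 l != 0 by apply/rV0Pn.
have -> : row k (kermx AQ^T) = (N%:~R)^-1 *: qv z.
  by rewrite Hz scalerA mulVf ?scale1r // intr_eq0.
apply: scalemx_sub; apply/sub_rVP; exists ((z 0 l)%:~R / (d 0 l)%:~R).
apply/rowP => i; rewrite !mxE.
have : d 0 l * z 0 i - d 0 i * z 0 l == 0.
  by apply/negPn; apply: contra Hn => H; apply/existsP; exists i; apply/existsP; exists l.
rewrite subr_eq0 => /eqP E.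
apply: (mulfI (x := (d 0 l)%:~R : rat)); first by rewrite intr_eq0.
rewrite -rmorphM /= E rmorphM /=.
have Hl' : ((d 0 l)%:~R : rat) != 0 by rewrite intr_eq0.
by field.
Qed.

End Lat.
Section Construct.
Variables (K : fieldType) (n m : nat) (A : 'M[int]_(m, n)).
Implicit Types (u v : 'X_{1..n}) (w d : 'rV[int]_n).
Local Notation I := (toric_ideal K A).
Local Notation tau := (@tau K n).

Lemma sub_toric m1 (B : 'M[int]_(m1, n)) m2 (C : 'M[int]_(m2, n)) :
  (forall u v, Amul B u = Amul B v -> Amul C u = Amul C v) ->
  forall f, toric_ideal K B f -> toric_ideal K C f.
Proof.
move=> H f /decomp [s [Hs Hf]].
apply: (igl_min (closed_I K C) _ Hf).
by move=> p /Hs /H E; apply/Itau.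
Qed.

Lemma pointed_of m1 (B : 'M[int]_(m1, n)) :
  (forall u v, Amul B u = Amul B v -> Amul A u = Amul A v) -> pointed A -> pointed B.
Proof.
move=> H HA u Hu; apply: HA; rewrite -(Amul0 A); apply: H.
by rewrite Hu Amul0.
Qed.

Definition cvec d (i j : 'I_n) : 'rV[int]_n :=
  d 0 j *: delta_mx 0 i - d 0 i *: delta_mx 0 j.

Lemma cvec_mul d i j (x : 'rV[int]_n) :
  (x *m (cvec d i j)^T) 0 0 = d 0 j * x 0 i - d 0 i * x 0 j.
Proof.
rewrite /cvec linearB /= !linearZ /= !trmx_delta mulmxDr -!scalemxAr mulmxN -!colE !mxE.
by rewrite mulrN.
Qed.

Lemma mx11_eq0 (M : 'M[int]_1) : (M == 0) = (M 0 0 == 0).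
Proof.
apply/eqP/eqP => [->|H]; first by rewrite mxE.
by apply/matrixP => a b; rewrite !ord1 mxE H.
Qed.

Lemma Amul_col m1 (C : 'M[int]_(m1, n)) u v :
  (Amul (col_mx A C) u = Amul (col_mx A C) v) <->
  (Amul A u = Amul A v /\ Amul C u = Amul C v).
Proof.
rewrite !Amul_eq tr_col_mx mul_mx_row; split => [/eqP|[-> ->]].
  by rewrite row_mx_eq0 => /andP[/eqP -> /eqP ->].
by rewrite row_mx0.
Qed.

Hypothesis HA : pointed A.
Hypothesis Hdim : kerQ_dim A = 2%N.

Lemma construct_nz p : Amul A p.1 = Amul A p.2 -> rv p.1 - rv p.2 != 0 ->
  exists m1 (B : 'M[int]_(m1, n)), [/\ pointed B,
    (forall f, toric_ideal K B f -> I f), toric_ideal K B (tau p) &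
    ~ same_set (toric_ideal K B) I].
Proof.
move=> Hp Nd; set d := rv p.1 - rv p.2.
have [w [i [j [Hw Nw]]]] := ex_ker_indep Hdim Nd.
pose B := col_mx A (cvec d i j).
have BA u v : Amul B u = Amul B v -> Amul A u = Amul A v by case/Amul_col.
exists (m + 1)%N, B; split.
- exact: pointed_of BA HA.
- exact: sub_toric BA.
- apply/Itau; apply/Amul_col; split => //; apply/Amul_eq.
  apply/eqP; rewrite mx11_eq0 cvec_mul -/d; apply/eqP; ring.
- move=> Heq; have : I (tau (mpos w, mneg w)) by apply/Itau; exact: Amul_pos_neg.
  move/Heq/Itau/Amul_col => [_ /Amul_eq /eqP]; rewrite /= rv_pos_neg mx11_eq0 cvec_mul.
  by rewrite (negbTE Nw).
Qed.

Lemma construct p : Amul A p.1 = Amul A p.2 ->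
  exists J : pset K n, [/\ is_toric J, ~ same_set J I,
    (forall f, J f -> I f), J (tau p) & closed J].
Proof.
move=> Hp.
have [Nd|] := boolP (rv p.1 - rv p.2 != 0).
  have [m1 [B [HB HBA HBp HBn]]] := construct_nz Hp Nd.
  exists (toric_ideal K B); split => //; first by exists m1, B.
  by apply: closed_I.
rewrite negbK subr_eq0 => /eqP /rv_inj Epp.
have [w0 [Nw0 Hw0]] := ex_ker_nz Hdim.
have Hp' : Amul A (mpos w0, mneg w0).1 = Amul A (mpos w0, mneg w0).2 by exact: Amul_pos_neg.
have Nd' : rv (mpos w0, mneg w0).1 - rv (mpos w0, mneg w0).2 != 0 by rewrite /= rv_pos_neg.
have [m1 [B [HB HBA HBp HBn]]] := construct_nz Hp' Nd'.
exists (toric_ideal K B); split => //; first by exists m1, B.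
  by rewrite /tau Epp subrr; exact: I0.
by apply: closed_I.
Qed.

End Construct.
Lemma ex_min (P : nat -> Prop) : (exists k, P k) -> exists k, P k /\ forall j, P j -> (k <= j)%N.
Proof.
move=> [k Hk]; apply: Classical_Prop.NNPP => Hn.
have H : forall k j, (j <= k)%N -> ~ P j.
  elim => [|k' IH] j Hj Pj.
    by apply: Hn; exists j; split => // j' _; move: Hj; rewrite leqn0 => /eqP ->.
  case: (ltnP j k'.+1) => Hjk; first by apply: (IH j) => //.
  have Ej : j = k'.+1 by apply/eqP; rewrite eqn_leq Hj Hjk.
  apply: Hn; exists j; split => // j' Pj'; case: (leqP j j') => // Hlt.
  by exfalso; apply: (IH j') => //; rewrite -ltnS -Ej.
exact: (H k k (leqnn k) Hk).
Qed.

Section L1.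
Variable n : nat.
Definition l1 (w : 'rV[int]_n) : nat := \sum_i `|w 0%R i|%N.
Definition l1q (x : 'rV[rat]_n) : rat := \sum_i `|x 0 i|.

Lemma l1_q w : (l1 w)%:R = l1q (qv w).
Proof.
rewrite /l1 /l1q natr_sum; apply: eq_bigr => i _.
by rewrite natr_absz intr_norm !mxE.
Qed.

Lemma l1qZ (a : rat) x : 0 <= a -> l1q (a *: x) = a * l1q x.
Proof.
move=> Ha; rewrite /l1q mulr_sumr; apply: eq_bigr => i _.
by rewrite mxE normrM ger0_norm.
Qed.

Lemma l1_gt0 w : w != 0 -> (0 < l1 w)%N.
Proof.
case/rV0Pn => i Hi; rewrite /l1 (bigD1 i) //=.
by rewrite ltn_addr // absz_gt0.
Qed.
End L1.

Section Principal.
Variables (K : fieldType) (n m : nat) (A : 'M[int]_(m, n)).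
Implicit Types (u v : 'X_{1..n}) (w d : 'rV[int]_n).
Local Notation I := (toric_ideal K A).
Local Notation tau := (@tau K n).

Lemma tau_swap (p : 'X_{1..n} * 'X_{1..n}) : tau (p.2, p.1) = - tau p.
Proof. by rewrite /tau opprB. Qed.

Lemma chain d (J : pset K n) : closed J -> J (tau (mpos d, mneg d)) ->
  forall (N : nat) u v, rv u - rv v = N%:Z *: d -> J (tau (u, v)).
Proof.
move=> HJ Hd; elim => [|N IH] u v.
  rewrite scale0r => /eqP; rewrite subr_eq0 => /eqP /rv_inj ->.
  by rewrite /tau subrr; case: HJ.
move=> Huv.
have Hi i : ((u i)%:Z - (v i)%:Z = (N.+1)%:Z * d 0 i)%R.
  by move/rowP: Huv => /(_ i); rewrite !mxE.
have Hpos i : (0 <= (v i)%:Z + d 0 i)%R by have := Hi i; nia.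
pose v' : 'X_{1..n} := [multinom absz ((v i)%:Z + d 0%R i)%R | i < n].
have Hv'i i : (v' i)%:Z = ((v i)%:Z + d 0 i)%R by rewrite mnmE abszE ger0_norm.
have H1 : rv u - rv v' = N%:Z *: d.
  apply/rowP => i; rewrite !mxE Hv'i; have := Hi i; rewrite -!/(rv _ 0 i).
  by move=> E; rewrite opprD addrA E -addn1 PoszD mulrDl mul1r addrK.
pose c : 'X_{1..n} := (v' - mpos d)%MM.
have Ev' : v' = (c + mpos d)%MM.
  apply/mnmP => k; have := Hv'i k; have := Hpos k.
  rewrite !mnmE; case: ifP => H; lia.
have Ev : v = (c + mneg d)%MM.
  apply/mnmP => k; have := Hv'i k; have := Hpos k.
  rewrite !mnmE; case: ifP => H1'; case: ifP => H2'; lia.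
have -> : tau (u, v) = tau (u, v') + 'X_[c] * tau (mpos d, mneg d).
  by rewrite /tau /= mulrBr -!mpolyXD -Ev' -Ev addrA subrK.
case: (HJ) => _ HD HM; apply: HD; first exact: IH.
exact: HM.
Qed.

Lemma chain_int d (J : pset K n) : closed J -> J (tau (mpos d, mneg d)) ->
  forall (k : int) u v, rv u - rv v = k *: d -> J (tau (u, v)).
Proof.
move=> HJ Hd [N|N] u v H.
  exact: (chain HJ Hd H).
have -> : tau (u, v) = - tau (v, u) by rewrite /tau opprB.
apply: (closedN HJ); apply: (chain HJ Hd (N := N.+1)).
by rewrite -opprB H NegzE scaleNr opprK.
Qed.

Hypothesis HA : pointed A.
Hypothesis Hdim : kerQ_dim A = 2%N.

Lemma principal m1 (B : 'M[int]_(m1, n)) : pointed B ->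
  (forall f, toric_ideal K B f -> I f) -> ~ same_set (toric_ideal K B) I ->
  exists p, Amul A p.1 = Amul A p.2 /\
    same_set (toric_ideal K B) (ideal_gen (fun _ : 'I_1 => tau p)).
Proof.
move=> HB HBA Hne.
set IB := toric_ideal K B.
have BA u v : Amul B u = Amul B v -> Amul A u = Amul A v.
  by move=> E; apply/(Itau K A (u, v))/HBA/Itau.
have LBA w : w *m B^T = 0 -> w *m A^T = 0.
  move=> Hw; have := BA _ _ (Amul_pos_neg Hw).
  by move/Amul_eq; rewrite rv_pos_neg.
have Step1 : ~ exists w1 w2, [/\ w1 *m B^T = 0, w2 *m B^T = 0 &
    row_free (col_mx (qv w1) (qv w2))].
  move=> [w1 [w2 [H1 H2 Hfree]]]; apply: Hne.
  set W := col_mx (qv w1) (qv w2).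
  have WA : (W <= kermx (AQ A)^T)%MS.
    by rewrite col_mx_sub; apply/andP; split; apply/ker_Q; apply: LBA.
  have WB : (W <= kermx (AQ B)^T)%MS.
    by rewrite col_mx_sub; apply/andP; split; apply/ker_Q.
  have AW : (kermx (AQ A)^T <= W)%MS.
    have [_ <-] := mxrank_leqif_sup WA.
    by rewrite (rank_kerQ Hdim); move: Hfree; rewrite /row_free.
  have AB u v : Amul A u = Amul A v -> Amul B u = Amul B v.
    move/Amul_eq/ker_Q => H; apply/Amul_eq/ker_Q.
    exact: submx_trans (submx_trans H AW) WB.
  move=> f; split; first exact: HBA.
  exact: sub_toric AB f.
have [Hex|Hnex] := Classical_Prop.classic (exists d, d != 0 /\ d *m B^T = 0).
  pose P k := exists d, [/\ d != 0, d *m B^T = 0 & l1 d = k].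
  have [k [[d [Nd Hd Hk]] Hmin]] : exists k, P k /\ forall j, P j -> (k <= j)%N.
    by apply: ex_min; case: Hex => d [Nd Hd]; exists (l1 d), d.
  have Hmul w : w *m B^T = 0 -> exists z : int, w = z *: d.
    move=> Hw.
    set C := col_mx (qv d) (qv w).
    have [dC wC] : (qv d <= C)%MS /\ (qv w <= C)%MS.
      by apply/andP; rewrite -col_mx_sub submx_refl.
    have Nfree : ~~ row_free C.
      by apply/negP => Hf; apply: Step1; exists d, w; split.
    have rd : \rank (qv d) = 1%N by rewrite rank_rV qv_eq0 Nd.
    have Cd : (C <= qv d)%MS.
      have [_ <-] := mxrank_leqif_sup dC; rewrite rd.
      move: Nfree (rank_leq_row C) (mxrankS dC); rewrite /row_free rd.
      by case: (\rank C) => [|[|[|]]].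
    have /sub_rVP [a Ha] := submx_trans wC Cd.
    set z := Num.floor a; exists z.
    set e := w - z *: d.
    have He : e *m B^T = 0 by rewrite /e mulmxBl -scalemxAl Hw Hd scaler0 subrr.
    have Hqe : qv e = (a - z%:~R) *: qv d by rewrite /e qvB qvZ Ha scalerBl.
    apply/eqP; rewrite -subr_eq0 -/e; apply: Classical_Prop.NNPP => /negP Ne.
    have Hle := Hmin (l1 e) (ex_intro _ e (And3 Ne He erefl)).
    have H0 : 0 <= a - z%:~R by rewrite subr_ge0 floor_le.
    have H1 : a - z%:~R < 1.
      by have := floorD1_gt a; rewrite rmorphD /= => Hlt; rewrite ltrBlDr addrC.
    have : ((l1 e)%:R : rat) < (l1 d)%:R.
      rewrite !l1_q Hqe l1qZ // -l1_q gtr_pMl // ltr0n.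
      exact: l1_gt0.
    by rewrite ltr_nat ltnNge Hk Hle.
  exists (mpos d, mneg d); split; first exact: Amul_pos_neg (LBA _ Hd).
  move=> f; split.
    move=> /decomp [s [Hs Hf]].
    apply: (igl_min (ideal_gen_closed _) _ Hf) => -[q1 q2] /Hs /Amul_eq Eq.
    have [z Hz] := Hmul _ Eq.
    apply: (chain_int (ideal_gen_closed _) _ Hz).
    exact: (ideal_gen_in _ ord0).
  move=> [c ->]; rewrite big_ord1; apply: IM; apply/Itau.
  exact: Amul_pos_neg Hd.
exists (0%MM, 0%MM); split => //.
move=> f; split.
  move=> /decomp [s [Hs Hf]].
  apply: (igl_min (ideal_gen_closed _) _ Hf) => -[q1 q2] /Hs /Amul_eq Eq.
  have : rv q1 - rv q2 = 0.
    by apply/eqP; apply: Classical_Prop.NNPP => Hn; apply: Hnex; exists (rv q1 - rv q2); split => //; apply/negP.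
  move/eqP; rewrite subr_eq0 => /eqP /rv_inj ->.
  case: (ideal_gen_closed (fun _ : 'I_1 => tau (0%MM, 0%MM))) => H0 _ _.
  have E0 : tau (q2, q2) = 0 by rewrite /tau subrr.
  by rewrite E0.
move=> [c ->]; rewrite big_ord1 /tau subrr mulr0; exact: I0.
Qed.

End Principal.
Section Final.
Variables (K : fieldType) (n m : nat) (A : 'M[int]_(m, n)).
Hypothesis HA : pointed A.
Hypothesis Hdim : kerQ_dim A = 2%N.
Local Notation I := (toric_ideal K A).
Local Notation tau := (@tau K n).
Local Notation pair0 := (@pair0 n).

Lemma sum_principal s (Is : 'I_s -> pset K n) (g : 'I_s -> {mpoly K[n]}) :
  (forall i, same_set (Is i) (ideal_gen (fun _ : 'I_1 => g i))) ->
  same_set (ideal_sum Is) (ideal_gen g).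
Proof.
move=> H f; split.
  move=> [h [Hh ->]].
  have Hex : forall i, exists c : {mpoly K[n]}, h i = c * g i.
    by move=> i; have /H [c ->] := Hh i; exists (c ord0); rewrite big_ord1.
  have [c Hc] := fin_all_exists Hex.
  by exists c; apply: eq_bigr => i _; rewrite Hc.
move=> [c ->]; exists (fun i => c i * g i); split => // i.
by apply/H; exists (fun _ => c i); rewrite big_ord1.
Qed.

Lemma principal_family s (Is : 'I_s -> pset K n) :
  (forall i, is_toric (Is i)) -> (forall i, ~ same_set (Is i) I) ->
  (forall i f, Is i f -> I f) ->
  exists P : 'I_s -> 'X_{1..n} * 'X_{1..n},
    forall i, Amul A (P i).1 = Amul A (P i).2 /\
      same_set (Is i) (ideal_gen (fun _ : 'I_1 => tau (P i))).
Proof.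
move=> Ht Hne Hsub.
have Hex : forall i, exists p : 'X_{1..n} * 'X_{1..n}, Amul A p.1 = Amul A p.2 /\
      same_set (Is i) (ideal_gen (fun _ : 'I_1 => tau p)).
  move=> i; have [m1 [B [HB HBs]]] := Ht i.
  have H1 : forall f, toric_ideal K B f -> I f by move=> f /HBs; apply: Hsub.
  have H2 : ~ same_set (toric_ideal K B) I.
    by move=> Heq; apply: (Hne i) => f; rewrite HBs Heq.
  have [p [Hp Hpg]] := principal Hdim HB H1 H2.
  by exists p; split => // f; rewrite HBs Hpg.
exact: fin_all_exists Hex.
Qed.

Lemma split_mu s : split_prop I s -> mu_prop I s.
Proof.
move=> [Is [Ht [Hne Hsum]]].
have Hsub i f : Is i f -> I f.
  move=> Hf; apply/Hsum; exists (fun j => if j == i then f else 0); split.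
    move=> j; case: eqP => [->//|_].
    have [m1 [B [_ HB]]] := Ht j; apply/HB; exact: I0.
  by rewrite (bigD1 i) //= eqxx big1 ?addr0 // => j /negbTE ->.
have [P HP] := principal_family Ht Hne Hsub.
exists (fun i => tau (P i)) => f.
by rewrite Hsum; apply: sum_principal => i; case: (HP i).
Qed.

Lemma mu_split t : mu_prop I t -> split_prop I t.
Proof.
move=> /(mu_bin HA) [s [Hsz Hs HIs]].
have Hex : forall i : 'I_t, exists J : pset K n, [/\ is_toric J, ~ same_set J I,
    (forall f, J f -> I f), J (tau (nth pair0 s i)) & closed J].
  move=> i; apply: construct => //; apply: Hs; apply: mem_nth; rewrite Hsz.
  exact: ltn_ord.
have [Js HJs] := fin_all_exists Hex.
exists Js; split; first by move=> i; case: (HJs i).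
split; first by move=> i; case: (HJs i).
move=> f; split.
  move/HIs/(igl_gen_N _ Hsz) => [c ->].
  exists (fun i => c i * tau (nth pair0 s i)); split => // i.
  by case: (HJs i) => _ _ _ Hi [_ _ HM]; apply: HM.
move=> [h [Hh ->]]; apply: Isum => i _.
by case: (HJs i) => _ _ Hsub _ _; apply: Hsub.
Qed.

Lemma binomial_tau p : Defs.binomial (tau p).
Proof. by exists p.1, p.2, 1, (-1); rewrite /tau !scaleNr !scale1r. Qed.

Lemma splitrad_bar r : split_rad_prop I r -> bar_prop I r.
Proof.
move=> [Is [Ht [Hne Hsum]]].
have Hsub i f : Is i f -> I f.
  move=> Hf; apply/Hsum; exists 1%N; rewrite expr1.
  exists (fun j => if j == i then f else 0); split.
    move=> j; case: eqP => [->//|_].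
    have [m1 [B [_ HB]]] := Ht j; apply/HB; exact: I0.
  by rewrite (bigD1 i) //= eqxx big1 ?addr0 // => j /negbTE ->.
have [P HP] := principal_family Ht Hne Hsub.
exists (fun i => tau (P i)); split; first by move=> i; exact: binomial_tau.
split; first by move=> i; apply/Itau; case: (HP i).
have Hs := sum_principal (fun i => proj2 (HP i)).
move=> f; rewrite Hsum; split => -[k Hk]; exists k; exact/Hs.
Qed.

Lemma bar_splitrad r : bar_prop I r -> split_rad_prop I r.
Proof.
move=> [g [Hb [HgI Hrad]]].
have Hex : forall i : 'I_r, exists J : pset K n, [/\ is_toric J, ~ same_set J I,
    (forall f, J f -> I f), J (g i) & closed J].
  move=> i; have [c [p [Hp Eg]]] := bin_in_I (Hb i) (HgI i).
  have [J [HJt HJn HJs HJp HJc]] := construct K HA Hdim Hp.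
  exists J; split => //; rewrite Eg -mul_mpolyC; case: HJc => _ _ HM; exact: HM.
have [Js HJs] := fin_all_exists Hex.
exists Js; split; first by move=> i; case: (HJs i).
split; first by move=> i; case: (HJs i).
move=> f; split.
  move/Hrad => [k [c Hc]]; exists k.
  exists (fun i => c i * g i); split => // i.
  by case: (HJs i) => _ _ _ Hi [_ _ HM]; apply: HM.
move=> [k [h [Hh Hfk]]].
have : I (f ^+ k).
  rewrite Hfk; apply: Isum => i _.
  by case: (HJs i) => _ _ Hsub _ _; apply: Hsub.
move/Hrad => [j Hj]; apply/Hrad; exists (k * j)%N; by rewrite exprM.
Qed.

Lemma least_iff (P Q : nat -> Prop) : (forall s, P s <-> Q s) ->
  forall s, least P s <-> least Q s.
Proof.
move=> H s; split => -[Hs Hmin]; split; first (by apply/H).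
- by move=> j /H; apply: Hmin.
- by apply/H.
- by move=> j /H; apply: Hmin.
Qed.

End Final.

Theorem theorem4p1 (K : fieldType) (n m : nat) (A : 'M[int]_(m, n)) :
  pointed A ->
  kerQ_dim A = 2%N ->
  (forall s : nat,
     least (split_prop (toric_ideal K A)) s <-> least (mu_prop (toric_ideal K A)) s) /\
  (forall r : nat,
     least (split_rad_prop (toric_ideal K A)) r <-> least (bar_prop (toric_ideal K A)) r).
Proof.
move=> HA Hdim; split; apply: least_iff => s; split.
- exact: split_mu.
- exact: mu_split.
- exact: splitrad_bar.
- exact: bar_splitrad.
Qed.
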